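(* Let $L,h,\beta>0$. There exists a solution $\hat{\mathcal Z}:\mathbb{R}\to\mathbb{R}^2$ of $\ddot z=-\nabla V_\beta(z)$ with energy $\frac12|\dot z|^2+V_\beta(z)=h$ such that: (i) $\hat{\mathcal Z}(0),\hat{\mathcal Z}(T)\in\ell$ for some $T>0$ and $\hat{\mathcal Z}(t)\in\mathcal P$ for all $t\in(0,T)$; (ii) the angle between $\dot{\hat{\mathcal Z}}(0)$ and $(1,0)$ is less than $\pi/2$, and the angle between $(-1,0)$ and $\dot{\hat{\mathcal Z}}(T)$ is greater than $\pi/2$; (iii) $\operatorname{Ind}(\hat{\mathcal Z}|_{[0,T]})=1$.
   Context: $V_\beta(z)=-\frac1{|z|}-\frac{\beta}{|z|^2}$ on $\mathbb{R}^2\setminus\{0\}$; $\ell=\{(x,y):y=-L\}$; $\mathcal P=\{(x,y):y>-L\}$. Winding number: for $u:[a,b]\to\overline{\mathcal P}$ with $u(a),u(b)\in\ell$ and $u(s)\in\mathcal P\setminus\{0\}$ for all $s\in(a,b)$, let $\gamma_u$ be the closed curve obtained by concatenating $u$ with the oriented segment from $u(b)$ to $u(a)$; then $\operatorname{Ind}(u)=\frac{1}{2\pi i}\oint_{\gamma_u}\frac{dz}{z}\in\mathbb{Z}$ (the winding number of $\gamma_u$ around the origin, identifying $\mathbb{R}^2$ with $\mathbb{C}$). *)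

(* Defs.v *)
From Stdlib Require Import Reals.
From Coquelicot Require Import Coquelicot.
Open Scope R_scope.

Definition nrm2 (z : R * R) : R := sqrt (fst z ^ 2 + snd z ^ 2).

Definition Vb (beta : R) (z : R * R) : R := - / nrm2 z - beta / (nrm2 z ^ 2).

Definition gradVb (beta : R) (z : R * R) : R * R :=
  (Derive (fun a => Vb beta (a, snd z)) (fst z),
   Derive (fun b => Vb beta (fst z, b)) (snd z)).

Definition vel (u : R -> R * R) (t : R) : R * R :=
  (Derive (fun s => fst (u s)) t, Derive (fun s => snd (u s)) t).

Definition acc (u : R -> R * R) (t : R) : R * R :=
  (Derive_n (fun s => fst (u s)) 2 t, Derive_n (fun s => snd (u s)) 2 t).

Definition is_solution (beta : R) (u : R -> R * R) : Prop :=
  (forall t, u t <> (0, 0)) /\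
  (forall t, ex_derive (fun s => fst (u s)) t /\ ex_derive (fun s => snd (u s)) t) /\
  (forall t, ex_derive (Derive (fun s => fst (u s))) t /\
             ex_derive (Derive (fun s => snd (u s))) t) /\
  (forall t, acc u t = (- fst (gradVb beta (u t)), - snd (gradVb beta (u t)))).

Definition energy (beta : R) (u : R -> R * R) (t : R) : R :=
  / 2 * (nrm2 (vel u t)) ^ 2 + Vb beta (u t).

Definition in_ell (L : R) (z : R * R) : Prop := snd z = - L.
Definition in_P (L : R) (z : R * R) : Prop := snd z > - L.

Definition dot2 (u v : R * R) : R := fst u * fst v + snd u * snd v.
Definition angle (u v : R * R) : R := acos (dot2 u v / (nrm2 u * nrm2 v)).

Definition cint_dz_over_z (g : R -> C) (a b : R) : C :=
  RInt (V := C_R_CompleteNormedModule)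
       (fun s => Cmult (vel g s) (Cinv (g s))) a b.

Definition segment (p q : C) (s : R) : C := Cplus p (Cmult (RtoC s) (Cminus q p)).

Definition Ind (u : R -> C) (a b : R) : C :=
  Cmult (Cinv (Cmult (RtoC (2 * PI)) Ci))
        (Cplus (cint_dz_over_z u a b) (cint_dz_over_z (segment (u b) (u a)) 0 1)).

(* Main.v *)
Require Import Defs.
From Stdlib Require Import Reals Lra Psatz Ranalysis5.
From Coquelicot Require Import Coquelicot.
Open Scope R_scope.


Lemma grad_formula beta x y : 0 < x ^ 2 + y ^ 2 ->
  gradVb beta (x, y) = (x * (/ nrm2 (x, y) ^ 3 + 2 * beta / nrm2 (x, y) ^ 4),
                        y * (/ nrm2 (x, y) ^ 3 + 2 * beta / nrm2 (x, y) ^ 4)).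
Proof. intros Hp. unfold gradVb, Vb, nrm2. cbn [fst snd].
  assert (Hs : 0 < sqrt (x ^ 2 + y ^ 2)) by (apply sqrt_lt_R0; auto).
  assert (Hss : sqrt (x ^ 2 + y ^ 2) ^ 2 = x ^ 2 + y ^ 2) by (apply pow2_sqrt; lra).
  f_equal; apply is_derive_unique; auto_derive;
  replace (x*(x*1) + y*(y*1)) with (x^2+y^2) by ring;
  set (s := sqrt (x^2+y^2)) in *.
  1,3: repeat split; auto; try lra; apply Rgt_not_eq; repeat apply Rmult_lt_0_compat; lra.
  all: field; lra.
Qed.

Lemma nrm2_polar t u : 0 < u -> nrm2 (- sin t / u, cos t / u) = / u.
Proof. intros Hu. unfold nrm2. cbn [fst snd].
  replace ((- sin t / u) ^ 2 + (cos t / u) ^ 2) with ((/ u) ^ 2).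
  - apply sqrt_pow2. apply Rlt_le, Rinv_0_lt_compat; auto.
  - pose proof (sin2_cos2 t). unfold Rsqr in H. field_simplify; try lra.
    replace (sin t ^ 2 + cos t ^ 2) with 1 by (simpl; lra). field. lra.
Qed.


Lemma acos_pos_lt q : 0 < q -> acos q < PI / 2.
Proof. intros Hq. rewrite acos_atan by auto. pose proof (atan_bound (sqrt (1 - q²) / q)). lra. Qed.

Lemma angle_lt v1 v2 : 0 < v1 -> angle (v1, v2) (1, 0) < PI / 2.
Proof. intros Hv. unfold angle, dot2, nrm2. cbn [fst snd].
  replace (1 ^ 2 + 0 ^ 2) with 1 by ring. rewrite sqrt_1.
  apply acos_pos_lt.
  assert (0 < sqrt (v1 ^ 2 + v2 ^ 2)) by (apply sqrt_lt_R0; pose proof (pow2_ge_0 v2);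
     assert (0 < v1 ^ 2) by (apply pow_lt; auto); lra).
  replace (v1 * 1 + v2 * 0) with v1 by ring. rewrite Rmult_1_r.
  apply Rdiv_lt_0_compat; auto. Qed.

Lemma angle_gt v1 v2 : 0 < v1 -> angle (-1, 0) (v1, v2) > PI / 2.
Proof. intros Hv. unfold angle, dot2, nrm2. cbn [fst snd].
  replace ((-1) ^ 2 + 0 ^ 2) with 1 by ring. rewrite sqrt_1.
  assert (0 < sqrt (v1 ^ 2 + v2 ^ 2)) by (apply sqrt_lt_R0; pose proof (pow2_ge_0 v2);
     assert (0 < v1 ^ 2) by (apply pow_lt; auto); lra).
  replace ((-1 * v1 + 0 * v2) / (1 * sqrt (v1 ^ 2 + v2 ^ 2))) with (- (v1 / sqrt (v1 ^ 2 + v2 ^ 2)))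
    by (field; lra).
  rewrite acos_opp. pose proof (acos_pos_lt (v1 / sqrt (v1 ^ 2 + v2 ^ 2))).
  assert (0 < v1 / sqrt (v1 ^ 2 + v2 ^ 2)) by (apply Rdiv_lt_0_compat; auto).
  specialize (H0 H1). lra. Qed.

Lemma is_RInt_val (f : R -> R) a b l l' : is_RInt f a b l -> l = l' -> is_RInt f a b l'.
Proof. intros; subst; auto. Qed.

Lemma seg_int (p : C) : RInt (V := C_R_CompleteNormedModule)
  (fun s => Cmult (vel (segment p p) s) (Cinv (segment p p s))) 0 1 = (0, 0).
Proof.
  assert (Hv : forall s, vel (segment p p) s = (0, 0)).
  { intros s. unfold vel. destruct p as [p1 p2].
    rewrite (Derive_ext _ (fun _ => p1)), (Derive_ext (fun s => snd (segment (p1, p2) (p1, p2) s)) (fun _ => p2)).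
    - rewrite !Derive_const. auto.
    - intros t. unfold segment, Cplus, Cmult, Cminus, Cplus, Copp, RtoC. cbn [fst snd]. ring.
    - intros t. unfold segment, Cplus, Cmult, Cminus, Cplus, Copp, RtoC. cbn [fst snd]. ring. }
  apply is_RInt_unique.
  apply (is_RInt_ext (V := C_R_CompleteNormedModule) (fun _ => (0, 0))).
  - intros x _. rewrite Hv. unfold Cmult. cbn [fst snd]. f_equal; ring.
  - apply (is_RInt_fct_extend_pair (U := R_NormedModule) (V := R_NormedModule)); cbn [fst snd];
    apply (is_RInt_val _ _ _ _ _ (is_RInt_const 0 1 0)); unfold scal; simpl; unfold mult; simpl; ring.
Qed.

Section Orbit.
Context (beta h k : R) (Hb : 0 < beta) (Hh : 0 < h) (Hk0 : 0 < k) (Hk1 : k < 1).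

Definition cc := sqrt (2 * beta / (1 - k ^ 2)).
Definition aa := (1 - k ^ 2) / (2 * beta * k ^ 2).
Definition bb := sqrt (aa ^ 2 + 2 * h * aa).
Definition MM := sqrt ((aa + bb) / (bb - aa)).
Definition ee := bb / aa.
Definition BB := MM / (k * cc * (ee - 1) * (aa + bb) ^ 2).

Lemma k2_lt1 : 0 < 1 - k ^ 2.
Proof. nra. Qed.

Lemma cc_pos : 0 < cc.
Proof. unfold cc. apply sqrt_lt_R0. pose proof k2_lt1. apply Rdiv_lt_0_compat; lra. Qed.

Lemma cc2 : cc ^ 2 = 2 * beta / (1 - k ^ 2).
Proof. unfold cc. rewrite pow2_sqrt; auto. pose proof k2_lt1.
  apply Rlt_le, Rdiv_lt_0_compat; lra. Qed.

Lemma aa_pos : 0 < aa.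
Proof. unfold aa. pose proof k2_lt1. apply Rdiv_lt_0_compat; try lra.
  apply Rmult_lt_0_compat; try lra. apply pow_lt; lra. Qed.

Lemma rel1 : aa * cc ^ 2 * k ^ 2 = 1.
Proof. rewrite cc2. unfold aa. pose proof k2_lt1. field. repeat split; lra. Qed.

Lemma rel2 : cc ^ 2 * (1 - k ^ 2) = 2 * beta.
Proof. rewrite cc2. pose proof k2_lt1. field. lra. Qed.

Lemma bb2 : bb ^ 2 = aa ^ 2 + 2 * h * aa.
Proof. unfold bb. rewrite pow2_sqrt; auto. pose proof aa_pos. nra. Qed.

Lemma bb_gt_aa : aa < bb.
Proof. pose proof aa_pos. pose proof bb2.
  assert (0 <= bb) by (unfold bb; apply sqrt_pos). nra. Qed.

Lemma MM_pos : 0 < MM.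
Proof. unfold MM. apply sqrt_lt_R0. pose proof aa_pos; pose proof bb_gt_aa.
  apply Rdiv_lt_0_compat; lra. Qed.

Lemma MM2 : MM ^ 2 = (aa + bb) / (bb - aa).
Proof. unfold MM. rewrite pow2_sqrt; auto. pose proof aa_pos; pose proof bb_gt_aa.
  apply Rlt_le, Rdiv_lt_0_compat; lra. Qed.

Lemma ee_gt1 : 1 < ee.
Proof. unfold ee. pose proof aa_pos; pose proof bb_gt_aa.
  apply (Rmult_lt_reg_r aa); auto. unfold Rdiv. rewrite Rmult_assoc, Rinv_l; lra. Qed.

Lemma BB_pos : 0 < BB.
Proof. unfold BB. pose proof aa_pos; pose proof bb_gt_aa; pose proof ee_gt1;
  pose proof MM_pos; pose proof cc_pos.
  apply Rdiv_lt_0_compat; auto. repeat apply Rmult_lt_0_compat; try lra.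
  all: try (apply pow_lt; lra). Qed.

Definition uu (t : R) := aa + bb * cos (k * t).
Definition tau (H : R) := (exp H - 1) / (exp H + 1).
Definition Th (H : R) := 2 / k * atan (MM * tau H).
Definition Tf (H : R) := BB * (ee * (exp H - exp (- H)) / 2 - H).
Definition dTf (H : R) := BB * (ee * (exp H + exp (- H)) / 2 - 1).

Lemma Tf_deriv H : is_derive Tf H (dTf H).
Proof. unfold Tf, dTf. auto_derive; [auto|]. field. Qed.

Lemma dTf_lb H : BB * (ee - 1) <= dTf H.
Proof. unfold dTf. pose proof BB_pos. pose proof ee_gt1.
  apply Rmult_le_compat_l; try lra.
  assert (1 <= (exp H + exp (- H)) / 2).
  { rewrite exp_Ropp. pose proof (exp_pos H).
    assert (Hx: (exp H + / exp H) - 2 = (exp H - 1)^2 / exp H) by (field; lra).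
    assert (0 <= (exp H - 1)^2 / exp H) by (apply Rdiv_le_0_compat; [apply pow2_ge_0|lra]).
    lra. }
  nra. Qed.

Lemma Tf_lb x y : x <= y -> BB * (ee - 1) * (y - x) <= Tf y - Tf x.
Proof. intros Hxy.
  destruct (MVT_gen Tf x y dTf) as [z [_ Hz]].
  - intros; apply Tf_deriv.
  - intros. apply continuity_pt_filterlim. apply (ex_derive_continuous Tf).
    eexists; apply Tf_deriv.
  - rewrite Hz. pose proof (dTf_lb z). apply Rmult_le_compat_r; lra.
Qed.

Lemma Tf_cont : continuity Tf.
Proof. intro x. apply continuity_pt_filterlim. apply (ex_derive_continuous Tf).
  eexists; apply Tf_deriv. Qed.

Lemma Tf_odd H : Tf (- H) = - Tf H.
Proof. unfold Tf. rewrite Ropp_involutive. field. Qed.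

Lemma Tf_0 : Tf 0 = 0.
Proof. unfold Tf. rewrite Ropp_0, exp_0. field. Qed.

Definition m0 := BB * (ee - 1).
Lemma m0_pos : 0 < m0.
Proof. unfold m0. pose proof BB_pos; pose proof ee_gt1. nra. Qed.

Lemma Tf_surj y : {x | Tf x = y}.
Proof.
  pose proof m0_pos as Hm.
  set (X := Rabs y / m0).
  assert (HX : 0 <= X) by (unfold X; apply Rdiv_le_0_compat; [apply Rabs_pos | lra]).
  assert (H1 : m0 * X <= Tf X) by (pose proof (Tf_lb 0 X HX) as HH; rewrite Tf_0 in HH; unfold m0 in *; lra).
  assert (H2 : Tf (- X) <= - (m0 * X)) by (rewrite Tf_odd; lra).
  assert (HmX : m0 * X = Rabs y) by (unfold X; field; lra).
  destruct (IVT_gen Tf (- X) X y Tf_cont) as [x [_ Hx]].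
  - assert (0 <= m0 * X) by (apply Rmult_le_pos; lra).
    assert (Tf (-X) <= Tf X) by lra.
    rewrite Rmin_left, Rmax_right by lra.
    split; [ | ]; pose proof (Rle_abs y); pose proof (Rle_abs (- y)); rewrite Rabs_Ropp in *; lra.
  - exists x; auto.
Defined.

Definition G (y : R) := proj1_sig (Tf_surj y).
Lemma Tf_G y : Tf (G y) = y.
Proof. unfold G. destruct (Tf_surj y); auto. Qed.

Lemma Tf_strict x y : x < y -> Tf x < Tf y.
Proof. intros. pose proof (Tf_lb x y). pose proof m0_pos. unfold m0 in *.
  assert (0 < BB * (ee - 1) * (y - x)) by (apply Rmult_lt_0_compat; lra). lra. Qed.

Lemma G_Tf x : G (Tf x) = x.
Proof. destruct (Rtotal_order (G (Tf x)) x) as [H|[H|H]]; auto;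
  apply Tf_strict in H; rewrite Tf_G in H; lra. Qed.

Lemma G_strict x y : x < y -> G x < G y.
Proof. intros. destruct (Rlt_or_le (G x) (G y)) as [H1|H1]; auto.
  destruct (Rle_lt_or_eq_dec _ _ H1) as [H2|H2].
  - apply Tf_strict in H2. rewrite !Tf_G in H2. lra.
  - apply (f_equal Tf) in H2. rewrite !Tf_G in H2. lra. Qed.


Lemma G_le x y : x <= y -> G x <= G y.
Proof. intros H. destruct (Rle_lt_or_eq_dec _ _ H) as [H1|H1].
  - left; apply G_strict; auto.
  - subst; lra. Qed.

Lemma G_cont y : continuity_pt G y.
Proof.
  apply (continuity_pt_recip_interv Tf G (G y - 1) (G y + 1)).
  - lra.
  - intros x z _ Hxz _; apply Tf_strict; auto.
  - intros x _ _; unfold comp, id; apply Tf_G.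
  - intros x Hx1 Hx2. apply G_le in Hx1. apply G_le in Hx2. rewrite !G_Tf in *. lra.
  - intros a _. apply Tf_cont.
  - rewrite <- (Tf_G y) at 2 3. split; apply Tf_strict; lra.
Qed.

Definition Tf_dpt (a : R) : derivable_pt Tf a :=
  exist _ (dTf a) (proj1 (is_derive_Reals Tf a (dTf a)) (Tf_deriv a)).

Lemma G_deriv y : is_derive G y (/ dTf (G y)).
Proof.
  apply is_derive_Reals.
  assert (Hi : G (y - 1) <= G y <= G (y + 1)) by (split; apply G_le; lra).
  pose proof (derivable_pt_lim_recip_interv Tf G (y - 1) (y + 1) y
    (fun a _ => Tf_dpt a) (G_cont y) ltac:(lra) ltac:(lra) Hi) as HH.
  simpl in HH.
  replace (/ dTf (G y)) with (1 / dTf (G y)) by (unfold Rdiv; ring).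
  apply HH.
  - intros x _; unfold comp, id; apply Tf_G.
  - pose proof (dTf_lb (G y)); pose proof m0_pos; unfold m0 in *; lra.
Qed.


Definition dtau (H : R) := 2 * exp H / (exp H + 1) ^ 2.
Definition dTh (H : R) := 2 / k * (MM * dtau H / (1 + (MM * tau H) ^ 2)).

Lemma tau_deriv H : is_derive tau H (dtau H).
Proof. unfold tau, dtau. pose proof (exp_pos H). auto_derive. lra. field. lra. Qed.

Lemma Th_deriv H : is_derive Th H (dTh H).
Proof. unfold Th, dTh, dtau, tau. pose proof (exp_pos H). auto_derive. lra. field. repeat split; try lra. assert (0 < (exp H + 1)^2) by (apply pow_lt; lra). assert (0 <= (MM*(exp H-1))^2) by apply pow2_ge_0. lra. Qed.


Lemma tau_bound H : -1 < tau H < 1.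
Proof. unfold tau. pose proof (exp_pos H). split.
  - apply (Rmult_lt_reg_r (exp H + 1)); [lra|]. unfold Rdiv. rewrite Rmult_assoc, Rinv_l; lra.
  - apply (Rmult_lt_reg_r (exp H + 1)); [lra|]. unfold Rdiv. rewrite Rmult_assoc, Rinv_l; lra.
Qed.

Lemma uu_Th H : uu (Th H) = (aa + bb) * (1 - tau H ^ 2) / (1 + MM ^ 2 * tau H ^ 2).
Proof. unfold uu, Th.
  replace (k * (2 / k * atan (MM * tau H))) with (2 * atan (MM * tau H)) by (field; lra).
  rewrite cos_2a_cos, cos_atan.
  set (x := MM * tau H).
  assert (Hs : 0 < 1 + x²) by (pose proof (Rle_0_sqr x); lra).
  assert (Hq : (1 / sqrt (1 + x²)) * (1 / sqrt (1 + x²)) = 1 / (1 + x²)).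
  { unfold Rdiv. rewrite !Rmult_1_l, <- Rinv_mult, sqrt_sqrt; lra. }
  replace (2 * (1 / sqrt (1 + x²)) * (1 / sqrt (1 + x²))) with (2 * (1 / (1 + x²))) by (rewrite <- Hq; ring).
  unfold x, Rsqr. pose proof aa_pos; pose proof bb_gt_aa.
  assert (0 <= tau H * tau H) by nra.
  assert (0 < (aa+bb)/(bb-aa)) by (apply Rdiv_lt_0_compat; lra).
  assert (0 < 1 + (aa + bb) / (bb - aa) * tau H ^ 2).
  { assert (0 <= (aa + bb) / (bb - aa) * tau H ^ 2) by (apply Rmult_le_pos; [lra|apply pow2_ge_0]). lra. }
  replace (MM * tau H * (MM * tau H)) with (MM ^ 2 * tau H ^ 2) by ring.
  assert (0 <= (aa + bb) * tau H ^ 2) by (apply Rmult_le_pos; [lra|apply pow2_ge_0]).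
  rewrite MM2. field. split; lra.
Qed.

Lemma uu_Th_pos H : 0 < uu (Th H).
Proof. rewrite uu_Th. pose proof aa_pos; pose proof bb_gt_aa. pose proof (tau_bound H).
  assert (0 <= MM ^ 2 * tau H ^ 2) by (apply Rmult_le_pos; apply pow2_ge_0).
  apply Rdiv_lt_0_compat; [|lra]. apply Rmult_lt_0_compat; [lra|]. simpl. nra. Qed.

Lemma key H : dTh H * / dTf H = cc * uu (Th H) ^ 2.
Proof.
  rewrite uu_Th. unfold dTh, dTf, dtau, BB, ee. unfold tau.
  rewrite exp_Ropp. pose proof (exp_pos H).
  pose proof aa_pos; pose proof bb_gt_aa; pose proof MM_pos; pose proof cc_pos.
  set (E := exp H) in *.
  replace ((MM * ((E - 1) / (E + 1))) ^ 2) with (MM ^ 2 * ((E - 1) / (E + 1)) ^ 2) by ring.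
  rewrite MM2.
  assert (0 < (bb-aa)*(E+1)^2) by (apply Rmult_lt_0_compat; [lra|apply pow_lt; lra]).
  assert (0 <= (aa+bb)*(E-1)^2) by (apply Rmult_le_pos; [lra|apply pow2_ge_0]).
  assert (2*E <= E*E+1) by (pose proof (pow2_ge_0 (E-1)); simpl in *; lra).
  assert (bb*(2*E) <= bb*(E*E+1)) by (apply Rmult_le_compat_l; lra).
  assert (aa*E < bb*E) by (apply Rmult_lt_compat_r; lra).
  field. repeat split; lra.
Qed.

Definition phi (t : R) := Th (G t).

Lemma phi_deriv t : is_derive phi t (cc * uu (phi t) ^ 2).
Proof. unfold phi. rewrite <- key.
  replace (dTh (G t) * / dTf (G t)) with (scal (/ dTf (G t)) (dTh (G t)))
    by (unfold scal; simpl; unfold mult; simpl; ring).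
  apply (is_derive_comp Th G). apply Th_deriv. apply G_deriv. Qed.



Definition up (t : R) := - (bb * k * sin (k * t)).
Definition upp (t : R) := - (bb * k ^ 2 * cos (k * t)).
Definition V1 (t : R) := cc * (- cos t * uu t + sin t * up t).
Definition V2 (t : R) := cc * (- sin t * uu t - cos t * up t).
Definition A1 (t : R) := cc ^ 2 * uu t ^ 2 * sin t * (uu t + upp t).
Definition A2 (t : R) := - (cc ^ 2 * uu t ^ 2 * cos t * (uu t + upp t)).

Lemma X_der t : 0 < uu t -> is_derive (fun x => - sin x / uu x) t (V1 t / (cc * uu t ^ 2)).
Proof. intros Hu. pose proof cc_pos. unfold V1, up. unfold uu in *.
  auto_derive. lra. field. lra. Qed.

Lemma Y_der t : 0 < uu t -> is_derive (fun x => cos x / uu x) t (V2 t / (cc * uu t ^ 2)).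
Proof. intros Hu. pose proof cc_pos. unfold V2, up. unfold uu in *.
  auto_derive. lra. field. lra. Qed.

Lemma V1_der t : 0 < uu t -> is_derive V1 t (A1 t / (cc * uu t ^ 2)).
Proof. intros Hu. pose proof cc_pos. unfold A1, V1, up, upp. unfold uu in *.
  auto_derive. auto. field. lra. Qed.

Lemma V2_der t : 0 < uu t -> is_derive V2 t (A2 t / (cc * uu t ^ 2)).
Proof. intros Hu. pose proof cc_pos. unfold A2, V2, up, upp. unfold uu in *.
  auto_derive. auto. field. lra. Qed.

Lemma chain (f : R -> R) (df : R -> R) (psi : R -> R) t :
  is_derive f (psi t) (df (psi t)) -> is_derive psi t (cc * uu (psi t) ^ 2) ->
  is_derive (fun s => f (psi s)) t (df (psi t) * (cc * uu (psi t) ^ 2)).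
Proof. intros H1 H2.
  replace (df (psi t) * (cc * uu (psi t) ^ 2)) with (scal (cc * uu (psi t) ^ 2) (df (psi t)))
    by (unfold scal; simpl; unfold mult; simpl; ring).
  apply (is_derive_comp f psi); auto. Qed.

Lemma force_id t : cc ^ 2 * (uu t + upp t) = 1 + 2 * beta * uu t.
Proof. pose proof rel1; pose proof rel2. unfold uu, upp.
  set (C := cos (k * t)).
  assert (E : cc ^ 2 * (aa + bb * C + - (bb * k ^ 2 * C)) - (1 + 2 * beta * (aa + bb * C))
     = (aa * cc ^ 2 * k ^ 2 - 1) + (aa + bb * C) * (cc ^ 2 * (1 - k ^ 2) - 2 * beta)) by ring.
  rewrite H, H0 in E. lra. Qed.

Lemma energy_id t : / 2 * (cc ^ 2 * (uu t ^ 2 + up t ^ 2)) - uu t - beta * uu t ^ 2 = h.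
Proof. pose proof rel1; pose proof rel2; pose proof bb2. unfold uu, up.
  set (C := cos (k * t)). set (S := sin (k * t)).
  assert (SC : S ^ 2 = 1 - C ^ 2) by (unfold S, C; pose proof (sin2_cos2 (k*t)); unfold Rsqr in *; simpl; lra).
  replace ((- (bb * k * S)) ^ 2) with (bb ^ 2 * k ^ 2 * S ^ 2) by ring. rewrite SC.
  assert (E : / 2 * (cc ^ 2 * ((aa + bb * C) ^ 2 + bb ^ 2 * k ^ 2 * (1 - C ^ 2))) - (aa + bb * C) -
     beta * (aa + bb * C) ^ 2 - h =
     (aa + bb * C) ^ 2 / 2 * (cc ^ 2 * (1 - k ^ 2) - 2 * beta)
     + (aa + h + bb * C) * (aa * cc ^ 2 * k ^ 2 - 1)
     + / 2 * cc ^ 2 * k ^ 2 * (bb ^ 2 - (aa ^ 2 + 2 * h * aa))) by (field).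
  rewrite H, H0, H1 in E. rewrite H1. apply Rminus_diag_uniq. rewrite E. field. Qed.


Section Sol.
Context (psi : R -> R) (Hd : forall t, is_derive psi t (cc * uu (psi t) ^ 2))
        (Hp : forall t, 0 < uu (psi t)).

Definition Zs (t : R) : R * R := (- sin (psi t) / uu (psi t), cos (psi t) / uu (psi t)).

Lemma dX t : is_derive (fun s => fst (Zs s)) t (V1 (psi t)).
Proof. unfold Zs; cbn [fst].
  replace (V1 (psi t)) with (V1 (psi t) / (cc * uu (psi t) ^ 2) * (cc * uu (psi t) ^ 2))
    by (pose proof cc_pos; pose proof (Hp t); field; lra).
  apply (chain (fun x => - sin x / uu x) (fun x => V1 x / (cc * uu x ^ 2))); auto.
  apply X_der; auto. Qed.

Lemma dY t : is_derive (fun s => snd (Zs s)) t (V2 (psi t)).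
Proof. unfold Zs; cbn [snd].
  replace (V2 (psi t)) with (V2 (psi t) / (cc * uu (psi t) ^ 2) * (cc * uu (psi t) ^ 2))
    by (pose proof cc_pos; pose proof (Hp t); field; lra).
  apply (chain (fun x => cos x / uu x) (fun x => V2 x / (cc * uu x ^ 2))); auto.
  apply Y_der; auto. Qed.

Lemma dV1 t : is_derive (fun s => V1 (psi s)) t (A1 (psi t)).
Proof.
  replace (A1 (psi t)) with (A1 (psi t) / (cc * uu (psi t) ^ 2) * (cc * uu (psi t) ^ 2))
    by (pose proof cc_pos; pose proof (Hp t); field; lra).
  apply (chain V1 (fun x => A1 x / (cc * uu x ^ 2))); auto.
  apply V1_der; auto. Qed.

Lemma dV2 t : is_derive (fun s => V2 (psi s)) t (A2 (psi t)).
Proof.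
  replace (A2 (psi t)) with (A2 (psi t) / (cc * uu (psi t) ^ 2) * (cc * uu (psi t) ^ 2))
    by (pose proof cc_pos; pose proof (Hp t); field; lra).
  apply (chain V2 (fun x => A2 x / (cc * uu x ^ 2))); auto.
  apply V2_der; auto. Qed.

Lemma DX t : Derive (fun s => fst (Zs s)) t = V1 (psi t).
Proof. apply is_derive_unique, dX. Qed.
Lemma DY t : Derive (fun s => snd (Zs s)) t = V2 (psi t).
Proof. apply is_derive_unique, dY. Qed.

Lemma DV1 t : Derive (fun s => V1 (psi s)) t = A1 (psi t).
Proof. apply is_derive_unique, dV1. Qed.
Lemma DV2 t : Derive (fun s => V2 (psi s)) t = A2 (psi t).
Proof. apply is_derive_unique, dV2. Qed.

Lemma vel_Zs t : vel Zs t = (V1 (psi t), V2 (psi t)).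
Proof. unfold vel. rewrite DX, DY. reflexivity. Qed.

Lemma Zs_nrm t : nrm2 (Zs t) = / uu (psi t).
Proof. unfold Zs. apply nrm2_polar, Hp. Qed.

Lemma Zs_sq t : 0 < fst (Zs t) ^ 2 + snd (Zs t) ^ 2.
Proof. pose proof (Zs_nrm t). unfold nrm2 in H.
  destruct (Rlt_or_le 0 (fst (Zs t) ^ 2 + snd (Zs t) ^ 2)) as [H1|H1]; auto.
  assert (fst (Zs t) ^ 2 + snd (Zs t) ^ 2 = 0).
  { apply Rle_antisym; auto. apply Rplus_le_le_0_compat; apply pow2_ge_0. }
  rewrite H0, sqrt_0 in H. pose proof (Hp t).
  pose proof (Rinv_0_lt_compat _ H2). lra. Qed.

Lemma Zs_solution : is_solution beta Zs.
Proof. split; [|split; [|split]].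
  - intros t Ht. pose proof (Zs_sq t). rewrite Ht in H. simpl in H. lra.
  - intros t; split; eexists; [apply dX | apply dY].
  - intros t; split.
    + apply (ex_derive_ext (fun s => V1 (psi s))). intros; symmetry; apply DX.
      eexists; apply dV1.
    + apply (ex_derive_ext (fun s => V2 (psi s))). intros; symmetry; apply DY.
      eexists; apply dV2.
  - intros t. unfold acc. simpl Derive_n.
    rewrite (Derive_ext _ (fun s => V1 (psi s))) by (intros; apply DX).
    rewrite (Derive_ext (fun x => Derive (fun x0 => snd (Zs x0)) x) (fun s => V2 (psi s))) by (intros; apply DY).
    rewrite DV1, DV2.
    pose proof (Zs_sq t) as Hsq. rewrite (surjective_pairing (Zs t)).
    rewrite grad_formula by exact Hsq. rewrite <- surjective_pairing, Zs_nrm. cbn [fst snd].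
    unfold Zs. cbn [fst snd].
    pose proof (Hp t). pose proof (force_id (psi t)).
    unfold A1, A2. f_equal.
    + replace (cc ^ 2 * uu (psi t) ^ 2 * sin (psi t) * (uu (psi t) + upp (psi t)))
        with (uu (psi t) ^ 2 * sin (psi t) * (cc ^ 2 * (uu (psi t) + upp (psi t)))) by ring.
      rewrite H0. field. lra.
    + replace (cc ^ 2 * uu (psi t) ^ 2 * cos (psi t) * (uu (psi t) + upp (psi t)))
        with (uu (psi t) ^ 2 * cos (psi t) * (cc ^ 2 * (uu (psi t) + upp (psi t)))) by ring.
      rewrite H0. field. lra.
Qed.

Lemma Zs_energy t : energy beta Zs t = h.
Proof. unfold energy. rewrite vel_Zs. unfold Vb. rewrite Zs_nrm.
  unfold nrm2 at 1. cbn [fst snd]. rewrite pow2_sqrt by (apply Rplus_le_le_0_compat; apply pow2_ge_0).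
  rewrite <- (energy_id (psi t)). pose proof (Hp t).
  unfold V1, V2. set (th := psi t). pose proof (sin2_cos2 th). unfold Rsqr in H0.
  replace ((cc * (- cos th * uu th + sin th * up th)) ^ 2 + (cc * (- sin th * uu th - cos th * up th)) ^ 2)
    with (cc ^ 2 * (uu th ^ 2 + up th ^ 2) * (sin th * sin th + cos th * cos th)) by ring.
  rewrite H0. field. unfold th; lra. Qed.

End Sol.

Lemma cos2_tan x : cos x <> 0 -> cos (2 * x) = (1 - tan x ^ 2) / (1 + tan x ^ 2).
Proof. intros Hc. rewrite cos_2a. unfold tan. pose proof (sin2_cos2 x) as H. unfold Rsqr in H.
  assert (H2 : sin x ^ 2 + cos x ^ 2 = 1) by (simpl; lra).
  assert (H3 : cos x ^ 2 + sin x ^ 2 = 1) by (simpl; lra).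
  replace ((1 - (sin x / cos x) ^ 2) / (1 + (sin x / cos x) ^ 2)) with
    ((cos x * cos x - sin x * sin x) / (sin x * sin x + cos x * cos x)).
  - rewrite H. field.
  - field. repeat split; auto; lra.
Qed.

Lemma tau_opp H : tau (- H) = - tau H.
Proof. unfold tau. rewrite exp_Ropp. pose proof (exp_pos H). field. lra. Qed.

Lemma Th_opp H : Th (- H) = - Th H.
Proof. unfold Th. rewrite tau_opp. replace (MM * - tau H) with (- (MM * tau H)) by ring.
  rewrite atan_opp. ring. Qed.

Lemma tau_strict x y : x < y -> tau x < tau y.
Proof. intros Hxy. unfold tau. pose proof (exp_pos x); pose proof (exp_pos y).
  pose proof (exp_increasing _ _ Hxy).
  apply (Rmult_lt_reg_r ((exp x + 1) * (exp y + 1))). nra.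
  field_simplify; try lra. Qed.

Lemma Th_strict x y : x < y -> Th x < Th y.
Proof. intros Hxy. unfold Th. apply Rmult_lt_compat_l.
  - unfold Rdiv; apply Rmult_lt_0_compat; [lra| apply Rinv_0_lt_compat; lra].
  - apply atan_increasing. apply Rmult_lt_compat_l. apply MM_pos. apply tau_strict; auto. Qed.

Lemma uu_even t : uu (- t) = uu t.
Proof. unfold uu. replace (k * - t) with (- (k * t)) by ring. rewrite cos_neg. auto. Qed.

Lemma uu_gt_PI t : k * PI <= PI -> - PI < t < PI -> uu PI < uu t.
Proof. intros HkP Ht. unfold uu. apply Rplus_lt_compat_l. apply Rmult_lt_compat_l.
  - pose proof aa_pos; pose proof bb_gt_aa; lra.
  - assert (Hc : cos (k * t) = cos (k * Rabs t)).
    { unfold Rabs. destruct (Rcase_abs t). replace (k * - t) with (- (k * t)) by ring.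
      rewrite cos_neg; auto. auto. }
    rewrite Hc. pose proof (Rabs_pos t). pose proof PI_RGT_0.
    assert (Rabs t < PI) by (unfold Rabs; destruct (Rcase_abs t); lra).
    assert (0 <= k * Rabs t) by (apply Rmult_le_pos; lra).
    assert (k * Rabs t < k * PI) by (apply Rmult_lt_compat_l; lra).
    assert (0 <= k * PI) by (apply Rmult_le_pos; lra).
    apply cos_decreasing_1; lra.
Qed.

Section Cross.
Context (L : R) (HL : 0 < L) (HuPI : uu PI = / L).

Definition tk := tan (k * PI / 2).
Lemma kPI2 : 0 < k * PI / 2 < PI / 2.
Proof. pose proof PI_RGT_0. split.
  - apply Rmult_lt_0_compat; [apply Rmult_lt_0_compat|]; lra.
  - assert (k * PI < 1 * PI) by (apply Rmult_lt_compat_r; lra). lra. Qed.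

Lemma tk_pos : 0 < tk.
Proof. unfold tk. pose proof kPI2. apply tan_gt_0; lra. Qed.

Lemma tk_lt_MM : tk < MM.
Proof.
  pose proof kPI2. pose proof tk_pos. pose proof MM_pos. pose proof aa_pos; pose proof bb_gt_aa.
  assert (Hc : cos (k * PI / 2) <> 0) by (apply Rgt_not_eq, cos_gt_0; lra).
  assert (HuP : 0 < uu PI) by (rewrite HuPI; apply Rinv_0_lt_compat; auto).
  unfold uu in HuP. replace (k * PI) with (2 * (k * PI / 2)) in HuP by field.
  rewrite cos2_tan in HuP by auto. fold tk in HuP.
  assert (0 < 1 + tk ^ 2) by (pose proof (pow2_ge_0 tk); lra).
  assert (H5 : 0 < (aa + bb) - (bb - aa) * tk ^ 2).
  { assert (E : aa + bb * ((1 - tk ^ 2) / (1 + tk ^ 2)) = ((aa + bb) - (bb - aa) * tk ^ 2) / (1 + tk ^ 2))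
      by (field; lra).
    rewrite E in HuP. apply (Rmult_lt_reg_r (/ (1 + tk ^ 2))). apply Rinv_0_lt_compat; lra.
    rewrite Rmult_0_l. exact HuP. }
  assert (tk ^ 2 < MM ^ 2).
  { rewrite MM2. apply (Rmult_lt_reg_r (bb - aa)); [lra|]. unfold Rdiv.
    rewrite Rmult_assoc, Rinv_l by lra. lra. }
  destruct (Rlt_or_le tk MM); auto. assert (MM ^ 2 <= tk ^ 2) by (apply pow_incr; lra). lra.
Qed.

Definition taue := tk / MM.
Definition He := ln ((1 + taue) / (1 - taue)).

Lemma taue_bound : 0 < taue < 1.
Proof. unfold taue. pose proof tk_pos; pose proof tk_lt_MM; pose proof MM_pos. split.
  - apply Rdiv_lt_0_compat; auto.
  - apply (Rmult_lt_reg_r MM); auto. unfold Rdiv. rewrite Rmult_assoc, Rinv_l; lra. Qed.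

Lemma tau_He : tau He = taue.
Proof. unfold tau, He. pose proof taue_bound.
  rewrite exp_ln. field. split; lra. apply Rdiv_lt_0_compat; lra. Qed.

Lemma He_pos : 0 < He.
Proof. pose proof taue_bound. unfold He. rewrite <- ln_1. apply ln_increasing; [lra|].
  apply (Rmult_lt_reg_r (1 - taue)); [lra|]. unfold Rdiv. rewrite Rmult_assoc, Rinv_l; lra. Qed.

Lemma Th_He : Th He = PI.
Proof. unfold Th. rewrite tau_He. unfold taue.
  replace (MM * (tk / MM)) with tk by (pose proof MM_pos; field; lra).
  unfold tk. rewrite atan_tan. field. lra. pose proof kPI2; lra. Qed.

Definition s0 := Tf He.
Lemma s0_pos : 0 < s0.
Proof. unfold s0. rewrite <- Tf_0. apply Tf_strict, He_pos. Qed.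

Definition psi (t : R) := Th (G (t - s0)).

Lemma psi_deriv t : is_derive psi t (cc * uu (psi t) ^ 2).
Proof. unfold psi.
  replace (cc * uu (Th (G (t - s0))) ^ 2) with (scal 1 (cc * uu (phi (t - s0)) ^ 2))
    by (unfold scal; simpl; unfold mult; simpl; unfold phi; ring).
  apply (is_derive_comp phi (fun t => t - s0)). apply phi_deriv.
  auto_derive; auto. Qed.

Lemma psi_pos t : 0 < uu (psi t).
Proof. apply uu_Th_pos. Qed.

Lemma psi_0 : psi 0 = - PI.
Proof. unfold psi. replace (0 - s0) with (Tf (- He)) by (unfold s0; rewrite Tf_odd; ring).
  rewrite G_Tf, Th_opp, Th_He. auto. Qed.

Lemma psi_T : psi (2 * s0) = PI.
Proof. unfold psi. replace (2 * s0 - s0) with (Tf He) by (unfold s0; ring).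
  rewrite G_Tf, Th_He. auto. Qed.

Lemma psi_range t : 0 < t < 2 * s0 -> - PI < psi t < PI.
Proof. intros Ht. unfold psi. rewrite <- Th_He. rewrite <- Th_opp.
  split; apply Th_strict.
  - rewrite <- (G_Tf (- He)). apply G_strict. rewrite Tf_odd. fold s0. lra.
  - rewrite <- (G_Tf He). apply G_strict. fold s0. lra. Qed.

Definition Zc := Zs psi.

Lemma kPI_le : k * PI <= PI.
Proof. pose proof PI_RGT_0. assert (k * PI < 1 * PI) by (apply Rmult_lt_compat_r; lra). lra. Qed.

Lemma Zc_0 : Zc 0 = (0, - L).
Proof. unfold Zc, Zs. rewrite psi_0, uu_even, HuPI, sin_neg, cos_neg, sin_PI, cos_PI.
  f_equal; field; lra. Qed.

Lemma Zc_T : Zc (2 * s0) = (0, - L).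
Proof. unfold Zc, Zs. rewrite psi_T, HuPI, sin_PI, cos_PI.
  f_equal; field; lra. Qed.

Lemma Zc_P t : 0 < t < 2 * s0 -> in_P L (Zc t).
Proof. intros Ht. unfold in_P, Zc, Zs. cbn [snd].
  pose proof (psi_range t Ht). pose proof (uu_gt_PI (psi t) kPI_le H).
  rewrite HuPI in H0. pose proof (COS_bound (psi t)).
  pose proof (psi_pos t).
  assert (/ uu (psi t) < L).
  { rewrite <- (Rinv_inv L). apply Rinv_lt_contravar; auto.
    apply Rmult_lt_0_compat; auto. apply Rinv_0_lt_compat; auto. }
  apply Rlt_gt. apply (Rmult_lt_reg_r (uu (psi t))); auto. unfold Rdiv.
  rewrite Rmult_assoc, Rinv_l by lra.
  assert (L * uu (psi t) > 1).
  { apply (Rmult_lt_reg_r (/ uu (psi t))). apply Rinv_0_lt_compat; auto.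
    rewrite Rmult_assoc, Rinv_r, Rmult_1_r, Rmult_1_l by lra. auto. }
  lra. Qed.

Lemma V1_PI : V1 PI = cc / L.
Proof. unfold V1. rewrite sin_PI, cos_PI, HuPI. field. lra. Qed.

Lemma V1_mPI : V1 (- PI) = cc / L.
Proof. unfold V1. rewrite sin_neg, cos_neg, sin_PI, cos_PI, uu_even, HuPI. field. lra. Qed.

Lemma integrand_eq t : Cmult (vel Zc t) (Cinv (Zc t)) =
  (- cc * up (psi t) * uu (psi t), cc * uu (psi t) ^ 2).
Proof. unfold Zc. rewrite (vel_Zs psi psi_deriv psi_pos).
  unfold Cmult, Cinv, Zs. cbn [fst snd]. pose proof (psi_pos t).
  set (th := psi t) in *. pose proof (sin2_cos2 th) as HS. unfold Rsqr in HS.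
  assert (sin th ^ 2 + cos th ^ 2 = 1) by (simpl; lra).
  assert (cos th ^ 2 + sin th ^ 2 = 1) by (simpl; lra).
  unfold V1, V2. f_equal; field; repeat split; lra. Qed.

Lemma cont_psi (f : R -> R) t : (forall x, ex_derive f x) -> continuous (fun s => f (psi s)) t.
Proof. intros Hf. apply (continuous_comp psi f).
  - apply (@ex_derive_continuous R_AbsRing R_NormedModule). eexists; apply psi_deriv.
  - apply (@ex_derive_continuous R_AbsRing R_NormedModule). apply Hf. Qed.

Lemma int_re : is_RInt (fun t => - cc * up (psi t) * uu (psi t)) 0 (2 * s0) 0.
Proof.
  assert (Hd : forall t, is_derive (fun s => - ln (uu (psi s))) t (- cc * up (psi t) * uu (psi t))).
  { intros t. pose proof (psi_pos t).
    replace (- cc * up (psi t) * uu (psi t)) with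
      ((- (up (psi t) / uu (psi t))) * (cc * uu (psi t) ^ 2)) by (field; lra).
    apply (chain (fun x => - ln (uu x)) (fun x => - (up x / uu x)) psi t); [|apply psi_deriv].
    unfold up, uu in *. auto_derive. lra. field. lra. }
  assert (E : minus ((fun s => - ln (uu (psi s))) (2 * s0)) ((fun s => - ln (uu (psi s))) 0) = 0).
  { cbv beta. rewrite psi_T, psi_0, uu_even. unfold minus, plus, opp; simpl. ring. }
  assert (HH := is_RInt_derive (fun s => - ln (uu (psi s))) (fun t => - cc * up (psi t) * uu (psi t)) 0 (2 * s0)
    (fun x _ => Hd x)
    (fun x _ => cont_psi (fun x => - cc * up x * uu x) x ltac:(intros y; unfold up, uu; auto_derive; auto))).
  apply (is_RInt_val _ _ _ _ _ HH). exact E.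
Qed.

Lemma int_im : is_RInt (fun t => cc * uu (psi t) ^ 2) 0 (2 * s0) (2 * PI).
Proof.
  assert (E : minus (psi (2 * s0)) (psi 0) = 2 * PI).
  { rewrite psi_T, psi_0. unfold minus, plus, opp; simpl. ring. }
  assert (HH := is_RInt_derive psi (fun t => cc * uu (psi t) ^ 2) 0 (2 * s0)
    (fun x _ => psi_deriv x)
    (fun x _ => cont_psi (fun x => cc * uu x ^ 2) x ltac:(intros y; unfold uu; auto_derive; auto))).
  apply (is_RInt_val _ _ _ _ _ HH). exact E.
Qed.

Lemma int_Z : RInt (V := C_R_CompleteNormedModule) (fun s => Cmult (vel Zc s) (Cinv (Zc s))) 0 (2 * s0) = (0, 2 * PI).
Proof.
  apply is_RInt_unique.
  apply (is_RInt_ext (V := C_R_CompleteNormedModule) (fun t => (- cc * up (psi t) * uu (psi t), cc * uu (psi t) ^ 2))).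
  - intros; symmetry; apply integrand_eq.
  - apply (is_RInt_fct_extend_pair (U := R_NormedModule) (V := R_NormedModule)); cbn [fst snd].
    + apply int_re.
    + apply int_im.
Qed.

Lemma Ind_Zc : Ind Zc 0 (2 * s0) = RtoC 1.
Proof. unfold Ind. rewrite Zc_T, Zc_0. unfold cint_dz_over_z. rewrite int_Z, seg_int.
  pose proof PI_RGT_0.
  unfold Cmult, Cinv, Cplus, RtoC, Ci; cbn [fst snd]. f_equal; field; lra. Qed.

End Cross.

End Orbit.

Lemma uu_cont beta h L x : 0 < beta -> 0 < h -> 0 < x < 1 ->
  continuity_pt (fun k => / L - uu beta h k PI) x.
Proof. intros Hb Hh Hx. apply continuity_pt_filterlim.
  apply (@ex_derive_continuous R_AbsRing R_NormedModule (fun k => / L - uu beta h k PI)).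
  unfold uu, bb, aa. auto_derive.
  assert (0 < x ^ 2 < 1) by (split; [apply pow_lt; lra | simpl; nra]).
  assert (0 < (1 - x ^ 2) / (2 * beta * x ^ 2)).
  { apply Rdiv_lt_0_compat; [lra|]. apply Rmult_lt_0_compat; lra. }
  assert (0 < ((1 - x ^ 2) / (2 * beta * x ^ 2)) ^ 2 + 2 * h * ((1 - x ^ 2) / (2 * beta * x ^ 2))).
  { assert (0 < 2 * h * ((1 - x ^ 2) / (2 * beta * x ^ 2))) by (apply Rmult_lt_0_compat; lra).
    pose proof (pow2_ge_0 ((1 - x ^ 2) / (2 * beta * x ^ 2))). lra. }
  replace (x * (x * 1)) with (x ^ 2) by ring.
  set (A := (1 - x ^ 2) / (2 * beta * x ^ 2)) in *.
  replace ((1 + - x ^ 2) * / (2 * beta * x ^ 2)) with A by reflexivity.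
  replace (A * (A * 1)) with (A ^ 2) by ring.
  assert (0 < 2 * beta * x ^ 2) by (apply Rmult_lt_0_compat; lra).
  repeat split; auto; lra.
Qed.

Lemma k_exists L h beta : 0 < L -> 0 < h -> 0 < beta ->
  {k | (0 < k /\ k < 1) /\ uu beta h k PI = / L}.
Proof. intros HL Hh Hb.
  pose proof PI_RGT_0 as HPI.
  set (q1 := L / (4 * (L + beta))).
  set (x := h * beta).
  assert (Hx : 0 < x) by (apply Rmult_lt_0_compat; auto).
  set (q2 := 1 - x / (1 + 4 * x)).
  assert (Hq1 : 0 < q1 < 1 / 4).
  { unfold q1. split. apply Rdiv_lt_0_compat; lra.
    apply (Rmult_lt_reg_r (4 * (L + beta))); [lra|]. unfold Rdiv. rewrite Rmult_assoc, Rinv_l; lra. }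
  assert (Hxq : 0 < x / (1 + 4 * x) < 1 / 4).
  { split. apply Rdiv_lt_0_compat; lra.
    apply (Rmult_lt_reg_r (1 + 4 * x)); [lra|]. unfold Rdiv. rewrite Rmult_assoc, Rinv_l; lra. }
  assert (Hq2 : 3 / 4 < q2 < 1) by (unfold q2; lra).
  set (k1 := sqrt q1). set (k2 := sqrt q2).
  assert (Hk1s : k1 ^ 2 = q1) by (unfold k1; apply pow2_sqrt; lra).
  assert (Hk2s : k2 ^ 2 = q2) by (unfold k2; apply pow2_sqrt; lra).
  assert (Hk1p : 0 < k1) by (unfold k1; apply sqrt_lt_R0; lra).
  assert (Hk2p : 0 < k2) by (unfold k2; apply sqrt_lt_R0; lra).
  assert (Hk1h : k1 <= 1 / 2).
  { destruct (Rle_or_lt k1 (1/2)); auto. assert (1/2 * (1/2) < k1 * k1) by (apply Rmult_le_0_lt_compat; lra). simpl in Hk1s. lra. }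
  assert (Hk2h : 3 / 4 < k2).
  { destruct (Rlt_or_le (3/4) k2); auto. assert (k2 ^ 2 <= (3/4) ^ 2) by (apply pow_incr; lra). lra. }
  assert (Hk2l : k2 < 1).
  { destruct (Rlt_or_le k2 1); auto. assert (1 ^ 2 <= k2 ^ 2) by (apply pow_incr; lra). lra. }
  assert (F1 : / L - uu beta h k1 PI < 0).
  { unfold uu. assert (Ha : aa beta k1 = (3 * L + 4 * beta) / (2 * beta * L)).
    { unfold aa. rewrite Hk1s. unfold q1. field. repeat split; lra. }
    assert (0 <= cos (k1 * PI)) by (apply cos_ge_0; assert (k1 * PI <= 1/2 * PI) by (apply Rmult_le_compat_r; lra); assert (0 <= k1 * PI) by (apply Rmult_le_pos; lra); lra).
    assert (0 <= bb beta h k1) by (unfold bb; apply sqrt_pos).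
    assert (0 <= bb beta h k1 * cos (k1 * PI)) by (apply Rmult_le_pos; auto).
    assert (/ L < aa beta k1).
    { rewrite Ha.
      assert (E : (3 * L + 4 * beta) / (2 * beta * L) - / L = (3 * L + 2 * beta) / (2 * beta * L)) by (field; lra).
      assert (0 < (3 * L + 2 * beta) / (2 * beta * L)).
      { apply Rdiv_lt_0_compat; [lra|]. apply Rmult_lt_0_compat; lra. }
      lra. }
    lra. }
  assert (F2 : 0 < / L - uu beta h k2 PI).
  { unfold uu.
    assert (Ha : aa beta k2 = (x / (1 + 4 * x)) / (2 * beta * q2)).
    { unfold aa. rewrite Hk2s. unfold q2. field. repeat split; lra. }
    assert (Hap : 0 < aa beta k2) by (rewrite Ha; apply Rdiv_lt_0_compat; [lra| apply Rmult_lt_0_compat; lra]).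
    assert (Ha2 : aa beta k2 < 2 * h).
    { rewrite Ha. set (n := x / (1 + 4 * x)).
      assert (Hn : n < x).
      { unfold n. apply (Rmult_lt_reg_r (1 + 4 * x)); [lra|]. unfold Rdiv.
        rewrite Rmult_assoc, Rinv_l by lra. assert (0 < x * x) by (apply Rmult_lt_0_compat; lra). lra. }
      assert (Hp : 0 < 2 * beta * q2) by (apply Rmult_lt_0_compat; lra).
      apply (Rmult_lt_reg_r (2 * beta * q2)); auto.
      replace (n / (2 * beta * q2) * (2 * beta * q2)) with n by (field; lra).
      replace (2 * h * (2 * beta * q2)) with (4 * x * q2) by (unfold x; ring).
      assert (4 * x * (3/4) < 4 * x * q2) by (apply Rmult_lt_compat_l; lra). lra. }
    assert (Hb2 : bb beta h k2 ^ 2 = aa beta k2 ^ 2 + 2 * h * aa beta k2).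
    { unfold bb. apply pow2_sqrt. assert (0 < 2 * h * aa beta k2) by (apply Rmult_lt_0_compat; lra).
      pose proof (pow2_ge_0 (aa beta k2)). lra. }
    assert (Hbp : 0 <= bb beta h k2) by (unfold bb; apply sqrt_pos).
    assert (Hc : cos (k2 * PI) < -1 / sqrt 2).
    { rewrite <- cos_3PI4.
      assert (k2 * PI < 1 * PI) by (apply Rmult_lt_compat_r; lra).
      assert (3/4 * PI < k2 * PI) by (apply Rmult_lt_compat_r; lra).
      apply cos_decreasing_1; lra. }
    set (r := / sqrt 2).
    assert (Hr : r ^ 2 = 1 / 2).
    { unfold r. rewrite <- Rinv_pow. simpl. rewrite Rmult_1_r, sqrt_sqrt by lra. field.
      apply Rgt_not_eq, sqrt_lt_R0; lra. }
    assert (Hrp : 0 < r) by (unfold r; apply Rinv_0_lt_compat, sqrt_lt_R0; lra).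
    assert (Hc' : cos (k2 * PI) < - r) by (unfold r; replace (-1 / sqrt 2) with (- / sqrt 2) in Hc by (field; apply Rgt_not_eq, sqrt_lt_R0; lra); lra).
    assert (Hbr : aa beta k2 < bb beta h k2 * r).
    { destruct (Rlt_or_le (aa beta k2) (bb beta h k2 * r)) as [HH|HH]; auto.
      assert ((bb beta h k2 * r) ^ 2 <= aa beta k2 ^ 2) by (apply pow_incr; split; [apply Rmult_le_pos; lra | lra]).
      rewrite Rpow_mult_distr, Hb2, Hr in H.
      assert (aa beta k2 * aa beta k2 < 2 * h * aa beta k2) by (apply Rmult_lt_compat_r; lra).
      simpl in H. lra. }
    assert (bb beta h k2 * cos (k2 * PI) <= bb beta h k2 * - r) by (apply Rmult_le_compat_l; lra).
    assert (0 < / L) by (apply Rinv_0_lt_compat; auto).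
    lra. }
  assert (Hk12 : k1 < k2) by lra.
  destruct (IVT_interv (fun k => / L - uu beta h k PI) k1 k2) as [k [Hk HF]]; auto.
  - intros a Ha. apply uu_cont; auto. lra.
  - exists k. split; [lra|]. cbv beta in HF. lra.
Qed.

Theorem lemma2p2 (L h beta : R) (hL : 0 < L) (hh : 0 < h) (hb : 0 < beta) :
  exists (Z : R -> R * R) (T : R),
    is_solution beta Z /\
    (forall t, energy beta Z t = h) /\
    (* (i) *)
    0 < T /\ in_ell L (Z 0) /\ in_ell L (Z T) /\
    (forall t, 0 < t < T -> in_P L (Z t)) /\
    (* (ii) *)
    angle (vel Z 0) (1, 0) < PI / 2 /\
    angle (-1, 0) (vel Z T) > PI / 2 /\
    (* (iii) *)
    Ind Z 0 T = RtoC 1.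
Proof.
  destruct (k_exists L h beta hL hh hb) as [k [[Hk0 Hk1] HuPI]].
  exists (Zc beta h k hb hh Hk0 Hk1), (2 * s0 beta h k).
  pose proof (psi_deriv beta h k hb hh Hk0 Hk1) as Hd.
  pose proof (psi_pos beta h k hb hh Hk0 Hk1) as Hp.
  assert (Hv : forall t, vel (Zc beta h k hb hh Hk0 Hk1) t =
     (V1 beta h k (psi beta h k hb hh Hk0 Hk1 t), V2 beta h k (psi beta h k hb hh Hk0 Hk1 t)))
    by (intros t; unfold Zc; apply vel_Zs; auto).
  assert (HcL : 0 < cc beta k / L) by (apply Rdiv_lt_0_compat; auto; apply cc_pos; auto).
  split; [|split; [|split; [|split; [|split; [|split; [|split; [|split]]]]]]].
  - unfold Zc. apply Zs_solution; auto.
  - intros t. unfold Zc. apply Zs_energy; auto.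
  - pose proof (s0_pos beta h k hb hh Hk0 Hk1 L hL HuPI). lra.
  - unfold in_ell. rewrite (Zc_0 beta h k hb hh Hk0 Hk1 L hL HuPI). reflexivity.
  - unfold in_ell. rewrite (Zc_T beta h k hb hh Hk0 Hk1 L hL HuPI). reflexivity.
  - intros t Ht. apply (Zc_P beta h k hb hh Hk0 Hk1 L hL HuPI t Ht).
  - rewrite Hv, (psi_0 beta h k hb hh Hk0 Hk1 L hL HuPI), (V1_mPI beta h k L hL HuPI).
    apply angle_lt; auto.
  - rewrite Hv, (psi_T beta h k hb hh Hk0 Hk1 L hL HuPI), (V1_PI beta h k L hL HuPI).
    apply angle_gt; auto.
  - apply (Ind_Zc beta h k hb hh Hk0 Hk1 L hL HuPI).
Qed.
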